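(* Let $C$ be a strictly convex cone in a topological real vector space $V$ such that the interior of $C$ in $V$ is non-empty and $C\neq V$. Then $V$ is one-dimensional and $C\cup\{0\}$ is a ray, i.e. $C\cup\{0\}=\{tx: t\ge 0\}$ for some non-zero $x\in V$.
   Context: Topological real vector spaces are not assumed Hausdorff. A cone is a subset $C$ with $\lambda C\subseteq C$ for all $\lambda>0$ (it may or may not contain $0$). For a subset $S$, $\mathrm{Aff}(S)$ is its affine hull; $\mathrm{ri}(S)$, $\mathrm{rc}(S)$ are the interior and closure of $S$ in the subspace topology of $\mathrm{Aff}(S)$. $]x,y[=\{(1-t)x+ty: t\in[0,1]\}\setminus\{x,y\}$. A set $C$ is strictly convex if for any two distinct $x,y\in\mathrm{rc}(C)$, $]x,y[\subseteq\mathrm{ri}(C)$. *)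

(* Defs.v *)
From HB Require Import structures.
From mathcomp Require Import all_boot all_order all_algebra.
From mathcomp Require Import all_classical all_reals all_analysis.
Set Implicit Arguments. Unset Strict Implicit. Unset Printing Implicit Defensive.
Import Order.TTheory GRing.Theory Num.Theory.
Local Open Scope classical_set_scope.
Local Open Scope ring_scope.

(* Real topological vector spaces: [V : topologicalLmodType R] with
   [R : realType]; the topology is NOT assumed Hausdorff. *)

Section ConvexDefs.
Context {R : realType} {V : topologicalLmodType R}.

Definition is_cone (C : set V) : Prop :=
  forall (l : R) (x : V), 0 < l -> C x -> C (l *: x).

Definition aff_hull (S : set V) : set V :=
  [set v | exists (n : nat) (a : 'I_n -> R) (p : 'I_n -> V),
      [/\ \sum_(i < n) a i = 1, (forall i, S (p i)) & v = \sum_(i < n) a i *: p i]].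

(* relative interior: interior of S in the subspace topology of Aff(S) *)
Definition rel_interior (S : set V) : set V :=
  [set x | S x /\ exists U : set V, [/\ open U, U x & U `&` aff_hull S `<=` S]].

(* relative closure: closure of S in the subspace topology of Aff(S) *)
Definition rel_closure (S : set V) : set V :=
  [set x | aff_hull S x /\
     forall U : set V, open U -> U x -> exists y, [/\ U y, aff_hull S y & S y]].

Definition open_segment (x y : V) : set V :=
  [set z | (exists t : R, [/\ 0 <= t, t <= 1 & z = (1 - t) *: x + t *: y])
           /\ z <> x /\ z <> y].

Definition strictly_convex (C : set V) : Prop :=
  forall x y : V, rel_closure C x -> rel_closure C y -> x <> y ->
    open_segment x y `<=` rel_interior C.

End ConvexDefs.

(* Main.v *)
Set Warnings "-notation-overridden,-ambiguous-paths,-notation-incompatible-prefix".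
Require Import Defs.
From HB Require Import structures.
From mathcomp Require Import all_boot all_order all_algebra.
From mathcomp Require Import all_classical all_reals all_analysis.
From mathcomp Require Import ring lra.
Import Order.TTheory GRing.Theory Num.Theory numFieldNormedType.Exports.
Local Open Scope classical_set_scope.
Local Open Scope ring_scope.
Section Helpers.
Context {R : realType} {V : topologicalLmodType R}.
Lemma scal_cont (c : R) : continuous (fun w : V => c *: w).
Proof.
move=> w.
apply: (@continuous_comp V (R^o * V)%type V (fun w => (c, w)) (fun z => z.1 *: z.2)); last exact: scale_continuous.
by apply: (@cvg_pair _ _ _ _ (nbhs (c : R^o))); [exact: cvg_cst|exact: cvg_id].
Qed.
Lemma fscal_cont (f : R -> R) (u : V) (s : R) : {for s, continuous f} ->
  {for s, continuous (fun t => f t *: u)}.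
Proof.
move=> cf.
apply: (@continuous_comp R (R^o * V)%type V (fun t : R => ((f t : R^o), u)) (fun z => z.1 *: z.2)); last exact: scale_continuous.
by apply: (@cvg_pair _ _ _ _ (nbhs (f s : R^o))); [exact: cf|exact: cvg_cst].
Qed.
Lemma add_cont (T : topologicalType) (f g : T -> V) (s : T) :
  {for s, continuous f} -> {for s, continuous g} ->
  {for s, continuous (fun t => f t + g t)}.
Proof.
move=> cf cg.
apply: (@continuous_comp T (V * V)%type V (fun t => (f t, g t)) (fun z => z.1 + z.2)); last exact: add_continuous.
by apply: cvg_pair; [exact: cf | exact: cg].
Qed.

Lemma int_scale (C : set V) (c : R) (x : V) : is_cone C -> 0 < c ->
  interior C x -> interior C (c *: x).
Proof.
move=> hC c0 hx.
have h : nbhs (c^-1 *: (c *: x)) C by rewrite scalerA mulVf ?gt_eqF // scale1r.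
have := scal_cont c^-1 (c *: x) _ h.
move=> H; rewrite /interior /=; apply: (@filterS _ (nbhs (c *: x)) _ ((fun w => c^-1 *: w) @^-1` C)) => // w /= Cw.
have := hC c _ c0 Cw; by rewrite scalerA divff ?gt_eqF // scale1r.
Qed.

Lemma cl_scale (C : set V) (c : R) (x : V) : is_cone C -> 0 < c ->
  closure C x -> closure C (c *: x).
Proof.
move=> hC c0 hx B hB.
have := scal_cont c x _ hB => /hx [y [Cy By]].
by exists (c *: y); split => //; apply: hC.
Qed.

Lemma scal_neq (a b : R) (z : V) : a != b -> z != 0 -> a *: z != b *: z.
Proof.
move=> ab z0; apply/negP; rewrite -subr_eq0 -scalerBl scaler_eq0 subr_eq0.
by rewrite (negbTE ab) (negbTE z0).
Qed.

Lemma small_pos (P : set R) : nbhs (0 : R) P -> exists2 e : R, 0 < e & P e.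
Proof.
move=> /nbhs_ballP [e /= e0 He]; exists (e / 2); first by rewrite divr_gt0.
apply: He; rewrite /ball /= sub0r normrN gtr0_norm ?divr_gt0 //.
lra.
Qed.

Lemma aff_all (C : set V) : is_cone C -> interior C !=set0 -> forall v, aff_hull C v.
Proof.
move=> hC [x0 hx0] v.
have cont : {for 0, continuous (fun s : R => x0 + s *: v)}.
  apply: add_cont; first exact: cvg_cst.
  exact: (@fscal_cont (fun t => t) v 0 cvg_id).
have h : nbhs ((fun s : R => x0 + s *: v) 0) C by rewrite /= scale0r addr0.
have [eps eps0 Ceps] := @small_pos ((fun s : R => x0 + s *: v) @^-1` C) (cont _ h).
exists 3%N, (fun i : 'I_3 => [:: eps^-1; 2 - eps^-1; -1]`_i),
  (fun i : 'I_3 => [:: x0 + eps *: v; x0; 2 *: x0]`_i); split.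
- rewrite !big_ord_recl big_ord0 /=; lra.
- case=> [[|[|[|]]] ?] //=.
  + exact: interior_subset.
  + by apply: hC => //; exact: interior_subset.
- rewrite !big_ord_recl big_ord0 /=.
  rewrite scalerDr scalerA mulVf ?gt_eqF // scale1r addr0 scalerA mulN1r scalerBl.
  rewrite scaleNr.
  by rewrite [2 *: x0 - _ - _]addrAC subrr add0r addrAC subrr add0r.
Qed.

Lemma zero_not_int (C : set V) : is_cone C -> C <> setT -> ~ interior C 0.
Proof.
move=> hC hT h0; apply: hT; apply/seteqP; split => // v _.
have cont : {for 0, continuous (fun s : R => s *: v)}.
  exact: (@fscal_cont (fun t => t) v 0 cvg_id).
have h : nbhs ((fun s : R => s *: v) 0) C by rewrite /= scale0r.
have [eps eps0 Ceps] := @small_pos ((fun s : R => s *: v) @^-1` C) (cont _ h).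
have := hC eps^-1 _ _ Ceps; rewrite invr_gt0 scalerA mulVf ?gt_eqF // scale1r.
by apply.
Qed.

Lemma rc_of (C : set V) : is_cone C -> interior C !=set0 ->
  forall y, closure C y -> rel_closure C y.
Proof.
move=> hC hI y hy; split; first exact: aff_all.
move=> U oU Uy.
have [w [Cw Uw]] := hy U (open_nbhs_nbhs (conj oU Uy)).
by exists w; split => //; exact: aff_all.
Qed.

Lemma ri_int (C : set V) : is_cone C -> interior C !=set0 -> rel_interior C `<=` interior C.
Proof.
move=> hC hI y [Cy [U [oU Uy sub]]].
rewrite /interior /=.
apply: (@filterS _ (nbhs y) _ U); last exact: open_nbhs_nbhs.
move=> w Uw; apply: sub; split => //.
exact: aff_all.
Qed.

Lemma bd (C : set V) : is_cone C -> strictly_convex C -> interior C !=set0 ->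
  forall z, closure C z -> z != 0 -> interior C z.
Proof.
move=> hC hS hI z hz z0.
have z2 : closure C (2 *: z) by apply: cl_scale => //; lra.
have hseg : open_segment z (2 *: z) ((3/2 : R) *: z).
  split.
    exists (1/2); split; [lra|lra|].
    by rewrite scalerA -scalerDl; congr (_ *: _); field.
  split; apply/eqP.
    by rewrite -[X in _ != X]scale1r; apply: scal_neq => //; apply/negP => /eqP; lra.
  by apply: scal_neq => //; apply/negP => /eqP; lra.
have hz2 : z <> 2 *: z.
  by apply/eqP; rewrite -[X in X != _]scale1r; apply: scal_neq => //; apply/negP => /eqP; lra.
have := hS _ _ (rc_of C hC hI _ hz) (rc_of C hC hI _ z2) hz2 _ hseg.
move=> /(ri_int C hC hI) /(@int_scale C (2/3) _ hC) H.
have := H ltac:(lra).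
by rewrite scalerA; have -> : (2/3 * (3/2) : R) = 1; [field | rewrite scale1r].
Qed.
Lemma path_cont (x0 v : V) :
  continuous (fun s : R => (1 - 2 * s) *: x0 + (4 * s * (1 - s)) *: v).
Proof.
move=> s.
apply: (@add_cont R (fun s => (1 - 2 * s) *: x0) (fun s => (4 * s * (1 - s)) *: v)).
  apply: (@fscal_cont (fun s => 1 - 2 * s)).
  by apply: cvgB; [exact: cvg_cst | apply: cvgM; [exact: cvg_cst | exact: cvg_id]].
apply: (@fscal_cont (fun s => 4 * s * (1 - s))).
apply: cvgM; first by apply: cvgM; [exact: cvg_cst | exact: cvg_id].
by apply: cvgB; [exact: cvg_cst | exact: cvg_id].
Qed.
End Helpers.

Theorem mainTheorem12 (R : realType) (V : topologicalLmodType R) (C : set V) :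
  is_cone C -> strictly_convex C -> interior C !=set0 -> C <> setT ->
  (exists e : V, e <> 0 /\ forall v : V, exists t : R, v = t *: e) /\
  (exists x : V, x <> 0 /\ C `|` [set 0] = [set t *: x | t in [set t : R | 0 <= t]]).
Proof.
move=> hC hS hI hT.
have [x0 hx0] := hI.
have x00 : x0 != 0.
  by apply/eqP => e; apply: (zero_not_int C hC hT); rewrite -e.
have clx0 : closure C x0 by apply: subset_closure; exact: interior_subset.
have nx : ~ closure C (- x0).
  move=> hn; apply: (zero_not_int C hC hT).
  have hne : x0 <> - x0.
    apply/eqP; rewrite -scaleN1r -[X in X != _]scale1r; apply: scal_neq => //.
    by apply/negP => /eqP; lra.
  have hseg : open_segment x0 (- x0) 0.
    split.
      exists (1/2); split; [lra|lra|].
      rewrite scalerN -scaleNr -scalerDl.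
      by rewrite (_ : 1 - 1/2 + - (1/2) = 0 :> R) ?scale0r //; field.
    by split; apply/eqP; rewrite eq_sym // oppr_eq0.
  exact: (ri_int C hC hI) (hS _ _ (rc_of C hC hI _ clx0) (rc_of C hC hI _ hn) hne _ hseg).
have span : forall v : V, exists t : R, v = t *: x0.
  move=> v; apply: contrapT => hv.
  pose g := fun s : R => (1 - 2 * s) *: x0 + (4 * s * (1 - s)) *: v.
  have gcont : continuous g := path_cont x0 v.
  have conn : connected [set: R].
    by apply/connected_intervalP => x y _ _ z _.
  have gnz : forall s, g s != 0.
    move=> s; apply/eqP => gs.
    have [k0|k0] := eqVneq (4 * s * (1 - s)) 0.
      have : s = 0 \/ s = 1.
        move: k0 => /eqP; rewrite !mulf_eq0 subr_eq0 => /orP[/orP[|]|] /eqP.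
        - by move=> h; exfalso; clear -h; lra.
        - by left.
        - by right.
      case=> es; move: gs; rewrite /g es.
        by rewrite !(mulr0, mul0r, subr0, scale1r, scale0r, addr0); apply/eqP.
      rewrite !(subrr, mulr0, scale0r, addr0, mulr1) => /eqP.
      rewrite scaler_eq0 (negbTE x00) orbF => /eqP; lra.
    apply: hv; exists (- (1 - 2 * s) / (4 * s * (1 - s))).
    move: gs; rewrite /g => /eqP; rewrite addrC addr_eq0 => /eqP gs.
    have := congr1 (fun w => (4 * s * (1 - s))^-1 *: w) gs.
    rewrite /= !scalerA mulVf // scale1r => ->.
    by rewrite -scaleNr scalerA mulrC.
  have B1 := conn (g @^-1` interior C).
  have hB : g @^-1` interior C = [set: R].
    apply: B1.
    - exists 0; rewrite /g /= !(mulr0, mul0r, subr0, scale1r, scale0r, addr0) //.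
    - exists (g @^-1` interior C); last by rewrite setTI.
      by apply: open_comp => [s _|]; [exact: gcont | exact: open_interior].
    - exists (g @^-1` closure C).
        by apply: preimage_closed => [s _|]; [exact: gcont | exact: closed_closure].
      rewrite setTI; apply/seteqP; split => s /=.
        by move=> hs; apply: subset_closure; exact: interior_subset.
      by move=> hs; apply: bd => //; exact: gnz.
  have : (g @^-1` interior C) 1 by rewrite hB.
  rewrite /= /g !(subrr, mulr0, scale0r, addr0, mulr1).
  rewrite (_ : 1 - 2 = -1 :> R) ?scaleN1r; last lra.
  by move=> /interior_subset /subset_closure.
split; first by exists x0; split => //; apply/eqP.
exists x0; split; first exact/eqP.
apply/seteqP; split => c.
  case=> [Cc|->]; last first.
    exists 0; last by rewrite scale0r.
    by rewrite /=.
  have [t ct] := span c; exists t; last by rewrite ct.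
  rewrite /=.
  rewrite leNgt; apply/negP => t0; apply: nx.
  apply: subset_closure.
  have := hC (- t^-1) c _ Cc; rewrite ct scalerA mulNr mulVf ?ltr0_neq0 // scaleN1r.
  by apply; rewrite oppr_gt0 invr_lt0.
case=> t /= t0 <-.
have [->|tn0] := eqVneq t 0; first by right; rewrite scale0r.
left; apply: hC; first by rewrite lt_def tn0.
exact: interior_subset.
Qed.
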